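(* Let $n\ge3$, let $z^\diamond\in\mathbb{R}^n$, and let $\mathcal{M}\subseteq\{1,\dots,n\}$ be a sample set that is a union of twin samples, contains $1$ and $n$, and contains a twin sample in every linear segment of $z^\diamond$. Let $A=\mathbf{I}_{\mathcal{M}}$ and $y=Az^\diamond$ (noiseless). Consider the following algorithm: (1) solve $\min_z\|Dz\|_1$ subject to $Az=y$, obtaining an optimal value $f^\star$ and an optimal solution $z^\star$; (2) define $s\in\{-1,0,+1\}^n$ by setting, for every pair of consecutive twin samples $(i-1,i)$ and $(j,j+1)$ in $\mathcal{M}$ and every $k\in\{i+1,\dots,j-1\}$, $s_k=\mathrm{sign}\big((z^\star_{j+1}-z^\star_j)-(z^\star_i-z^\star_{i-1})\big)$, and $s_k=0$ for all other $k$; (3) return $\arg\min_z s^{\mathsf{T}}z$ subject to $Az=y$ and $\|Dz\|_1\le f^\star$. Then the algorithm returns $z^\diamond$, i.e., it recovers $z^\diamond$ exactly.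
   Context: $D\in\mathbb{R}^{(n-2)\times n}$ is the second-order difference operator, $(Dz)_k=z_k-2z_{k+1}+z_{k+2}$; $\mathbf{I}_{\mathcal{M}}$ consists of the rows of the identity indexed by $\mathcal{M}$. A twin sample is a pair of consecutive indices $\{i,i+1\}\subseteq\mathcal{M}$. The corners of $z^\diamond$ are the indices $i\in\{2,\dots,n-1\}$ with $z^\diamond_{i-1}-2z^\diamond_i+z^\diamond_{i+1}\ne0$; if $c_1<\dots<c_p$ are the corners, $c_0=1$, $c_{p+1}=n$, the linear segments are the index sets $\{c_t,\dots,c_{t+1}\}$, $t=0,\dots,p$; a twin sample lies in a segment if both its indices belong to it. $\mathrm{sign}(0)=0$. *)

(* Defs.v *)
(* Indices are 0-based: the paper's index k (1..n) is k-1 here. *)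
From HB Require Import structures.
From mathcomp Require Import all_boot all_order all_algebra.
From mathcomp Require Import reals.
Set Implicit Arguments. Unset Strict Implicit. Unset Printing Implicit Defensive.
Import Order.TTheory GRing.Theory Num.Theory.
Local Open Scope ring_scope.

Section Defs.
Variable R : realType.
Variable n : nat.

Definition ent (z : 'cV[R]_n) (k : nat) : R :=
  if (insub k : option 'I_n) is Some i then z i 0 else 0.

Definition inM (M : {set 'I_n}) (k : nat) : bool :=
  if (insub k : option 'I_n) is Some i then i \in M else false.

Definition twin (M : {set 'I_n}) (i : nat) : bool := inM M i && inM M i.+1.

Definition union_of_twins (M : {set 'I_n}) : Prop :=
  forall k : 'I_n, k \in M -> exists i, twin M i /\ (val k = i \/ val k = i.+1).

Definition Dmat : 'M[R]_(n - 2, n) :=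
  \matrix_(k < n - 2, j < n)
    (if val j == val k then 1 else if val j == (val k).+1 then -2
     else if val j == (val k).+2 then 1 else 0).

Definition norm1 m (v : 'cV[R]_m) : R := \sum_i `|v i 0|.

(* A = I_M : the rows of the identity indexed by M (in increasing order) *)
Definition Amat (M : {set 'I_n}) : 'M[R]_(#|M|, n) :=
  \matrix_(r < #|M|, j < n) (((@enum_val _ (mem M) r) == j)%:R).

Definition corner (z : 'cV[R]_n) (k : nat) : bool :=
  (0 < k)%N && (k < n.-1)%N && (ent z k.-1 - 2 * ent z k + ent z k.+1 != 0).

Definition breakpoint (z : 'cV[R]_n) (k : nat) : bool :=
  (k == 0)%N || (k == n.-1) || corner z k.

(* every linear segment {c_t,..,c_{t+1}} (consecutive breakpoints) contains a twin sample *)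
Definition twin_in_every_segment (z : 'cV[R]_n) (M : {set 'I_n}) : Prop :=
  forall a b : nat, breakpoint z a -> breakpoint z b -> (a < b)%N ->
    (forall c, (a < c < b)%N -> ~~ corner z c) ->
    exists i, [/\ (a <= i)%N, (i.+1 <= b)%N & twin M i].

Definition consec_twins (M : {set 'I_n}) (i j : nat) : Prop :=
  [/\ (0 < i)%N, (i <= j)%N, twin M i.-1, twin M j &
      forall m, (i < m < j)%N -> ~~ inM M m].

Definition sign_vector (M : {set 'I_n}) (zs s : 'cV[R]_n) : Prop :=
  forall k : 'I_n,
    (forall i j, consec_twins M i j -> (i < k < j)%N ->
       s k 0 = Num.sg ((ent zs j.+1 - ent zs j) - (ent zs i - ent zs i.-1)))
    /\ ((~ exists i j, consec_twins M i j /\ (i < k < j)%N) -> s k 0 = 0).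

End Defs.

(* Main.v *)
Require Import Defs.
From HB Require Import structures.
From mathcomp Require Import all_boot all_order all_algebra.
From mathcomp Require Import reals zify ring lra.
From Stdlib Require Import ClassicalEpsilon.
Import Order.TTheory GRing.Theory Num.Theory.
Local Open Scope ring_scope.
Set Implicit Arguments. Unset Strict Implicit. Unset Printing Implicit Defensive.

Section S.
Variable R : realType.

Ltac nlia := repeat match goal with
  | H : ?T |- _ => match T with
                   | context [R] => clear H
                   | forall _, _ => clear H
                   | exists _, _ => clear H
                   end
  end; lia.

Lemma entE m (v : 'cV[R]_m) k : ent v k = \sum_(j < m) (val j == k)%:R * v j 0.
Proof.
rewrite /ent; case: insubP => [i _ <-|hk].
  rewrite (bigD1 i) //= eqxx mul1r big1 ?addr0 // => j hj.
  by rewrite -[val j == val i]/(j == i) (negbTE hj) mul0r.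
rewrite big1 // => j _.
have -> : (val j == k) = false by apply/negbTE; apply/eqP => hjk; move: hk; rewrite -hjk ltn_ord.
by rewrite mul0r.
Qed.

Lemma ent_ord m (v : 'cV[R]_m) (k : 'I_m) : ent v k = v k 0.
Proof. by rewrite /ent valK. Qed.

Definition dd m (z : 'cV[R]_m) (c : nat) := ent z c.-1 - 2 * ent z c + ent z c.+1.

Variable n : nat.

Lemma coef (a b : nat) : (if a == b then 1 else if a == b.+1 then -2 else if a == b.+2 then 1 else 0) = (a == b)%:R - 2 * (a == b.+1)%:R + (a == b.+2)%:R :> R.
Proof.
have [->|h1] := eqVneq a b.
  have -> : (b == b.+1) = false by nlia.
  have -> : (b == b.+2) = false by nlia.
  by rewrite /= mulr0 subr0 addr0.
have [->|h2] := eqVneq a b.+1.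
  have -> : (b.+1 == b.+2) = false by nlia.
  by rewrite /= mulr1 add0r addr0.
have [_|h3] := eqVneq a b.+2.
  by rewrite /= mulr0 subr0 add0r.
by rewrite /= mulr0 subr0 addr0.
Qed.

Lemma Drow (z : 'cV[R]_n) (r : 'I_(n - 2)) : (Dmat R n *m z) r 0 = dd z r.+1.
Proof.
rewrite /dd /= !entE mulr_sumr -sumrB -big_split /= mxE.
apply: eq_bigr => j _; rewrite mxE coef; ring.
Qed.

Lemma DTrow (v : 'cV[R]_(n - 2)) (k : 'I_n) : (2 <= k)%N ->
  ((v^T *m Dmat R n) 0 k) = ent v (k - 2) - 2 * ent v k.-1 + ent v k.
Proof.
move=> hk; rewrite !entE mulr_sumr -sumrB -big_split /= mxE.
apply: eq_bigr => r _; rewrite !mxE coef.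
have hk' : (2 <= val k)%N := hk.
have -> : (val k == (val r).+1) = (val r == (val k).-1) by apply/idP/idP => /eqP h; apply/eqP; nlia.
have -> : (val k == (val r).+2) = (val r == val k - 2)%N by apply/idP/idP => /eqP h; apply/eqP; nlia.
rewrite eq_sym; ring.
Qed.

Variable zd : 'cV[R]_n.
Variable M : {set 'I_n}.
Hypothesis hn : (3 <= n)%N.
Hypothesis hU : union_of_twins M.
Hypothesis h0 : inM M 0.
Hypothesis hN : inM M n.-1.
Hypothesis hseg : twin_in_every_segment zd M.

Lemma inM_lt k : inM M k -> (k < n)%N.
Proof. by rewrite /inM; case: insubP => // i hi <- _. Qed.

Lemma inM_ord (k : 'I_n) : inM M k = (k \in M).
Proof. by rewrite /inM valK. Qed.

Lemma twin_of m : inM M m -> exists t, twin M t /\ (m = t \/ m = t.+1).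
Proof.
move=> hm; have hlt := inM_lt hm.
have := hU (k := Ordinal hlt); rewrite -inM_ord => /(_ hm) [t [ht e]].
by exists t.
Qed.

Definition feasible (z : 'cV[R]_n) := forall k, inM M k -> ent z k = ent zd k.

Lemma sum_delta (z : 'cV[R]_n) (o : 'I_n) : \sum_j ((o == j)%:R * z j 0) = z o 0.
Proof.
rewrite (bigD1 o) //= eqxx mul1r big1 ?addr0 // => j hj.
by rewrite eq_sym (negbTE hj) mul0r.
Qed.

Lemma Amat_feas (z : 'cV[R]_n) : Amat R M *m z = Amat R M *m zd -> feasible z.
Proof.
move=> H k hk; have hlt := inM_lt hk.
set o := Ordinal hlt.
have oM : o \in M by rewrite -inM_ord.
have := congr1 (fun A : 'M[R]_(#|M|, 1) => A (enum_rank_in oM o) 0) H; rewrite !mxE /=.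
under eq_bigr do rewrite mxE.
under [X in _ = X]eq_bigr do rewrite mxE.
rewrite (enum_rankK_in oM oM) !sum_delta => e.
by rewrite -[k]/(val o) !ent_ord.
Qed.

Lemma feas_ord (z : 'cV[R]_n) (k : 'I_n) : feasible z -> k \in M -> z k 0 = zd k 0.
Proof. by move=> hf hk; rewrite -!ent_ord; apply: hf; rewrite inM_ord. Qed.

Lemma ct_facts i j : consec_twins M i j ->
  (0 < i)%N /\ (i <= j)%N /\ inM M i.-1 /\ inM M i /\ inM M j /\ inM M j.+1 /\
      forall m, (i < m < j)%N -> ~~ inM M m.
Proof.
case=> hi hij /andP[a b] /andP[c e] f.
by rewrite (ltn_predK hi) in b; do !split.
Qed.

Definition gapP c i j := [/\ consec_twins M i j, (i.+2 <= j)%N & (i <= c <= j)%N].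

Lemma gap_uniq c i j i' j' : gapP c i j -> gapP c i' j' -> i = i' /\ j = j'.
Proof.
case=> /ct_facts [a1 [b1 [c1 [d1 [e1 [f1 g1]]]]]] h1 /andP[k1 l1].
case=> /ct_facts [a2 [b2 [c2 [d2 [e2 [f2 g2]]]]]] h2 /andP[k2 l2].
have ei : i = i'.
  case: (ltngtP i i') => // hlt.
  - case: (ltnP i' j) => hj.
      by move: (g1 i'); rewrite hlt hj d2 => /(_ isT).
    have ej : i' = j by nlia.
    have := g1 i'.-1; rewrite c2.
    have -> : (i < i'.-1 < j)%N by nlia.
    by move=> /(_ isT).
  - case: (ltnP i j') => hj.
      by move: (g2 i); rewrite hlt hj d1 => /(_ isT).
    have ej : i = j' by nlia.
    have := g2 i.-1; rewrite c1.
    have -> : (i' < i.-1 < j')%N by nlia.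
    by move=> /(_ isT).
subst i'; split=> //.
case: (ltngtP j j') => // hlt.
- by move: (g2 j); rewrite hlt e1 (_ : (i < j)%N = true) //; [move=> /(_ isT)|nlia].
- by move: (g1 j'); rewrite hlt e2 (_ : (i < j')%N = true) //; [move=> /(_ isT)|nlia].
Qed.

Definition gap c : option (nat * nat) :=
  match excluded_middle_informative (exists p : nat * nat, gapP c p.1 p.2) with
  | left h => Some (proj1_sig (constructive_indefinite_description _ h))
  | right _ => None
  end.

Lemma gap_spec c : match gap c with Some p => gapP c p.1 p.2 | None => forall i j, ~ gapP c i j end.
Proof.
rewrite /gap; case: excluded_middle_informative => [h|h].
  by case: constructive_indefinite_description.
by move=> i j hp; apply: h; exists (i, j).
Qed.

Lemma gap_some c i j : gapP c i j -> gap c = Some (i, j).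
Proof.
move=> hp; have := gap_spec c; case: (gap c) => [[i' j'] /= hp'|/(_ i j hp)] //.
by have [-> ->] := gap_uniq hp hp'.
Qed.

Lemma unsampled (k : 'I_n) : k \notin M ->
  exists i j, consec_twins M i j /\ (i < k < j)%N.
Proof.
move=> kM; rewrite -inM_ord in kM.
have ex1 : exists m, (m <= k)%N && inM M m by exists 0%N; rewrite h0 andbT.
have ub1 : forall m, (m <= k)%N && inM M m -> (m <= k)%N by move=> m /andP[].
case: (ex_maxnP ex1 ub1) => i /andP[ik iM] imax.
have ex2 : exists m, (k <= m)%N && inM M m by exists n.-1; rewrite hN andbT; have := ltn_ord k; nlia.
case: (ex_minnP ex2) => j /andP[kj jM] jmin.
have ik' : (i < k)%N by case: (ltngtP i k) ik => // e; move: kM; rewrite -e iM.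
have kj' : (k < j)%N by case: (ltngtP k j) kj => // e; move: kM; rewrite e jM.
exists i, j; split => //; last by rewrite ik'.
have [t [ht [et|et]]] := twin_of iM.
  have := imax i.+1; rewrite et; move: ht => /andP[_ ->]; rewrite andbT.
  have -> : (t.+1 <= k)%N by nlia.
  by move=> /(_ isT); nlia.
have [t' [ht' [et'|et']]] := twin_of jM; last first.
  have := jmin t'; move: ht' => /andP[-> _]; rewrite andbT.
  have -> : (k <= t')%N by nlia.
  by move=> /(_ isT); nlia.
split; first by nlia.
- by nlia.
- by rewrite et.
- by rewrite et'.
move=> m /andP[im mj]; apply/negP => mM.
case: (leqP m k) => hmk.
  by have := imax m; rewrite hmk mM => /(_ isT); nlia.
by have := jmin m; rewrite mM andbT (ltnW hmk) => /(_ isT); nlia.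
Qed.

Lemma corner_dd k : (0 < k)%N -> (k < n.-1)%N -> corner zd k = (dd zd k != 0).
Proof. by move=> a b; rewrite /corner a b. Qed.

Lemma corner_uniq i j c1 c2 : consec_twins M i j -> (i.+2 <= j)%N ->
  (i <= c1 <= j)%N -> (i <= c2 <= j)%N -> dd zd c1 != 0 -> dd zd c2 != 0 -> c1 = c2.
Proof.
move=> hct hij.
have [a [b [c [d [e [f g]]]]]] := ct_facts hct.
have jn := inM_lt f.
wlog lt12 : c1 c2 / (c1 <= c2)%N.
  move=> W h1 h2 h3 h4; case: (leqP c1 c2) => h; first exact: W.
  by apply/esym; apply: W => //; apply: ltnW.
move=> /andP[ic1 c1j] /andP[ic2 c2j] n1 n2.
case: (ltngtP c1 c2) lt12 => // hlt _.
have ex : exists m, (c1 < m)%N && corner zd m.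
  by exists c2; rewrite hlt corner_dd //; nlia.
case: (ex_minnP ex) => b' /andP[c1b cb] bmin.
have bp1 : breakpoint zd c1 by rewrite /breakpoint corner_dd ?n1 ?orbT //; nlia.
have bp2 : breakpoint zd b' by rewrite /breakpoint cb !orbT.
have b'c2 : (b' <= c2)%N by apply: bmin; rewrite hlt corner_dd //; nlia.
have := hseg bp1 bp2 c1b.
case.
  move=> x /andP[c1x xb']; apply/negP => cx.
  by have := bmin x; rewrite c1x cx => /(_ isT); nlia.
move=> t [ct tb /andP[tM t1M]].
case: (ltngtP i t) => [it|ti|it].
- have := g t; rewrite it tM /=; have -> : (t < j)%N by apply: leq_trans tb (leq_trans b'c2 c2j).
  by move=> /(_ isT).
- by move: ti ct ic1; clear; nlia.
- subst t.
  have := g i.+1; rewrite t1M /=; have -> : (i < i.+1 < j)%N by move: hij; clear; nlia.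
  by move=> /(_ isT).
Qed.

Definition Dlz (z : 'cV[R]_n) i j := (ent z j.+1 - ent z j) - (ent z i - ent z i.-1).

Lemma tele (z : 'cV[R]_n) i j : (i <= j.+1)%N -> \sum_(i <= c < j.+1) dd z c = Dlz z i j.
Proof.
move=> h; apply: (telescope_sumr_eq (fun c => ent z c - ent z c.-1)) => // c _.
rewrite /dd /=; ring.
Qed.

Lemma sum_single (F : nat -> R) a i j : (i <= a <= j)%N ->
  (forall c, (i <= c <= j)%N -> c != a -> F c = 0) -> \sum_(i <= c < j.+1) F c = F a.
Proof.
move=> /andP[ia aj] H.
rewrite (@big_cat_nat _ _ _ a) //=; last by nlia.
rewrite (@big_ltn _ _ _ a j.+1); last by nlia.
rewrite big_nat big1 ?add0r; last first.
  move=> c /andP[ic ca]; apply: H; [nlia|]; apply/eqP; nlia.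
rewrite big_nat big1 ?addr0 // => c /andP[ac cj]; apply: H; [nlia|]; apply/eqP; nlia.
Qed.

Definition cz i j : nat :=
  match excluded_middle_informative (exists c, (i <= c <= j)%N /\ dd zd c != 0) with
  | left h => proj1_sig (constructive_indefinite_description _ h)
  | right _ => i
  end.

Lemma cz_spec i j : consec_twins M i j -> (i.+2 <= j)%N ->
  [/\ (i <= cz i j <= j)%N,
      (forall c, (i <= c <= j)%N -> c != cz i j -> dd zd c = 0) &
      Dlz zd i j = dd zd (cz i j)].
Proof.
move=> hct hij.
have H2 : (forall c, (i <= c <= j)%N -> c != cz i j -> dd zd c = 0) -> (i <= cz i j <= j)%N ->
  Dlz zd i j = dd zd (cz i j).
  by move=> H hr; rewrite -tele; [apply: sum_single|nlia].
suff H1 : (i <= cz i j <= j)%N /\ (forall c, (i <= c <= j)%N -> c != cz i j -> dd zd c = 0).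
  by case: H1 => a b; split => //; apply: H2.
rewrite /cz; case: excluded_middle_informative => [h|h].
  case: constructive_indefinite_description => c0 [hc0 nc0] /=; split => // c hc ne.
  case: (eqVneq (dd zd c) 0) => // nc.
  by rewrite (corner_uniq hct hij hc hc0 nc nc0) eqxx in ne.
split; first by apply/andP; split; nlia.
move=> c hc _; case: (eqVneq (dd zd c) 0) => // nc; exfalso; apply: h; by exists c.
Qed.

Definition U c : R := match gap c with Some (i, j) => Num.sg (Dlz zd i j) | None => Num.sg (dd zd c) end.
Definition Q c : R := match gap c with Some (i, j) => ((c%:R - (cz i j)%:R) ^+ 2 / 2) | None => 0 end.

Lemma ent_col (F : nat -> R) m : (m < n - 2)%N -> ent (\col_(r < n - 2) F r.+1) m = F m.+1.
Proof. by move=> hm; rewrite /ent; case: insubP => [o _ <-|]; [rewrite mxE|rewrite hm]. Qed.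

Lemma gap_unsampled (k : 'I_n) : k \notin M -> exists i j,
  [/\ consec_twins M i j, (i < k < j)%N, gap k.-1 = Some (i, j), gap k = Some (i, j) &
      gap k.+1 = Some (i, j)].
Proof.
move=> kM; have [i [j [hct /andP[ik kj]]]] := unsampled kM.
have [a [b [c [d [e [f g]]]]]] := ct_facts hct.
exists i, j; split => //; first by rewrite ik kj.
all: apply: gap_some; split => //; try nlia; apply/andP; split; nlia.
Qed.

Lemma DT_col (F : nat -> R) (k : 'I_n) : k \notin M ->
  ((\col_(r < n - 2) F r.+1)^T *m Dmat R n) 0 k = F k.-1 - 2 * F k + F k.+1.
Proof.
move=> kM; have [i [j [hct /andP[ik kj] _ _ _]]] := gap_unsampled kM.
have [a [b [c [d [e [f g]]]]]] := ct_facts hct.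
have jn := inM_lt f.
rewrite DTrow; last by nlia.
rewrite !ent_col; try nlia.
have -> : (k - 2).+1 = k.-1 by nlia.
by have -> : (k.-1).+1 = k by nlia.
Qed.

Definition uv : 'cV[R]_(n - 2) := \col_(r < n - 2) U r.+1.
Definition Gv : 'cV[R]_(n - 2) := \col_(r < n - 2) (U r.+1 * Q r.+1).

Lemma uv_DT (k : 'I_n) : k \notin M -> (uv^T *m Dmat R n) 0 k = 0.
Proof.
move=> kM; rewrite /uv (DT_col U) //; have [i [j [_ _ e1 e2 e3]]] := gap_unsampled kM.
rewrite /U e1 e2 e3; ring.
Qed.

Lemma Gv_DT (k : 'I_n) : k \notin M -> exists i j, consec_twins M i j /\ (i < k < j)%N /\
  (Gv^T *m Dmat R n) 0 k = Num.sg (Dlz zd i j).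
Proof.
move=> kM; rewrite /Gv (DT_col (fun c => U c * Q c)) //; have [i [j [hct hk e1 e2 e3]]] := gap_unsampled kM.
exists i, j; split => //; split => //.
rewrite /U /Q e1 e2 e3.
have k1 : (0 < k)%N by have := ct_facts hct; nlia.
have -> : (k.-1)%:R = (k%:R - 1 : R) by rewrite -subn1 natrB.
by rewrite -natr1; field.
Qed.

Lemma colB m (A B : 'cV[R]_m) i : (A - B) i 0 = A i 0 - B i 0.
Proof. by rewrite !mxE. Qed.

Lemma mulE m (A : 'M[R]_(1, m)) (B : 'cV[R]_m) : (A *m B) 0 0 = \sum_k A 0 k * B k 0.
Proof. by rewrite mxE. Qed.

Lemma MI (v : 'cV[R]_(n - 2)) (z : 'cV[R]_n) :
  \sum_r v r 0 * ((Dmat R n *m z) r 0 - (Dmat R n *m zd) r 0) =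
  \sum_k (v^T *m Dmat R n) 0 k * (z k 0 - zd k 0).
Proof.
transitivity ((v^T *m Dmat R n *m (z - zd)) 0 0); last first.
  by rewrite mulE; apply: eq_bigr => k _; rewrite colB.
rewrite -mulmxA mulE; apply: eq_bigr => r _; rewrite mulmxBr colB [v^T 0 r]mxE //.
Qed.

Lemma u_zd r : uv r 0 * (Dmat R n *m zd) r 0 = `|(Dmat R n *m zd) r 0|.
Proof.
rewrite mxE Drow; have := gap_spec r.+1; rewrite /U; case: (gap r.+1) => [[i j] /= [hct hij hc]|_].
  have [hcz hz hD] := cz_spec hct hij.
  case: (eqVneq r.+1 (cz i j)) => [->|ne]; first by rewrite hD normrEsg.
  by rewrite (hz _ hc ne) mulr0 normr0.
by rewrite normrEsg.
Qed.

Lemma u_bound r : `|uv r 0| <= 1.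
Proof.
rewrite mxE /U; case: (gap r.+1) => [[i j]|]; rewrite normr_sg; by case: (_ != 0).
Qed.

Lemma Q_ge0 c : 0 <= Q c.
Proof. rewrite /Q; case: (gap c) => [[i j]|] //; apply: divr_ge0 => //; apply: sqr_ge0. Qed.

Lemma G_zd r : Gv r 0 * (Dmat R n *m zd) r 0 = 0.
Proof.
rewrite mxE Drow; have := gap_spec r.+1; rewrite /U /Q; case: (gap r.+1) => [[i j] /= [hct hij hc]|_].
  have [hcz hz hD] := cz_spec hct hij.
  case: (eqVneq r.+1 (cz i j)) => [->|ne]; first by rewrite subrr expr0n /= mul0r mulr0 mul0r.
  by rewrite (hz _ hc ne) mulr0.
by rewrite mulr0 mul0r.
Qed.

Lemma LB (z : 'cV[R]_n) : feasible z -> \sum_r uv r 0 * (Dmat R n *m z) r 0 = norm1 (Dmat R n *m zd).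
Proof.
move=> fz.
have -> : \sum_r uv r 0 * (Dmat R n *m z) r 0 =
  \sum_r uv r 0 * (Dmat R n *m zd) r 0 +
  \sum_r uv r 0 * ((Dmat R n *m z) r 0 - (Dmat R n *m zd) r 0).
  by rewrite -big_split /=; apply: eq_bigr => r _; ring.
have Z : \sum_k (uv^T *m Dmat R n) 0 k * (z k 0 - zd k 0) = 0.
  apply: big1 => k _; case: (boolP (k \in M)) => kM.
    by rewrite (feas_ord fz kM) subrr mulr0.
  by rewrite uv_DT // mul0r.
rewrite MI Z addr0.
by rewrite /norm1; apply: eq_bigr => r _; rewrite u_zd.
Qed.

Lemma normLB (z : 'cV[R]_n) : feasible z -> norm1 (Dmat R n *m zd) <= norm1 (Dmat R n *m z).
Proof.
move=> fz; rewrite -(LB fz) /norm1; apply: ler_sum => r _.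
apply: (le_trans (ler_norm _)); rewrite normrM.
have := u_bound r; have := normr_ge0 ((Dmat R n *m z) r 0); nra.
Qed.

Lemma propagate (f : nat -> R) i j c0 : (0 < i)%N -> (i <= c0 <= j)%N ->
  f i.-1 = 0 -> f i = 0 -> f j = 0 -> f j.+1 = 0 ->
  (forall c, (i <= c <= j)%N -> c != c0 -> f c.-1 - 2 * f c + f c.+1 = 0) ->
  forall k, (i.-1 <= k <= j.+1)%N -> f k = 0.
Proof.
move=> i0 /andP[ic cj] f1 f2 f3 f4 H.
have fwd : forall t, (i + t <= c0)%N -> f (i + t)%N.-1 = 0 /\ f (i + t)%N = 0.
  elim=> [|t IH] ht; first by rewrite addn0; split.
  have ht' : (i + t <= c0)%N by rewrite addnS in ht; exact: ltnW.
  have [a b] := IH ht'.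
  have := H (i + t)%N (ltac:(apply/andP; split; nlia)) (ltac:(apply/eqP; nlia)).
  rewrite a b addnS /=; split => //; lra.
have bwd : forall t, (t <= j)%N -> (c0 <= j - t)%N -> f (j - t)%N = 0 /\ f (j - t)%N.+1 = 0.
  elim=> [|t IH] ht hc; first by rewrite subn0.
  have [a b] := IH (ltnW ht) (ltac:(nlia)).
  have := H (j - t)%N (ltac:(apply/andP; split; nlia)) (ltac:(apply/eqP; nlia)).
  rewrite a b.
  have -> : (j - t.+1)%N = (j - t).-1 by nlia.
  have -> : ((j - t).-1).+1 = (j - t)%N by nlia.
  rewrite a; split => //; lra.
move=> k /andP[k1 k2].
case: (leqP k c0) => hk.
  case: (ltnP k i) => hki.
    by have -> : k = i.-1 by nlia.
  have := fwd (k - i)%N; rewrite (_ : (i + (k - i))%N = k); last by nlia.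
  by case => //; nlia.
case: (ltnP j k) => hjk.
  by have -> : k = j.+1 by nlia.
have := bwd (j - k)%N; rewrite (_ : (j - (j - k))%N = k); last by nlia.
by case => //; nlia.
Qed.

Lemma main (zstar : 'cV[R]_n) :
    Amat R M *m zstar = Amat R M *m zd ->
    (forall z : 'cV[R]_n, Amat R M *m z = Amat R M *m zd ->
       norm1 (Dmat R n *m zstar) <= norm1 (Dmat R n *m z)) ->
  forall s : 'cV[R]_n,
    sign_vector M zstar s ->
    (Amat R M *m zd = Amat R M *m zd /\
     norm1 (Dmat R n *m zd) <= norm1 (Dmat R n *m zstar)) /\
    (forall z : 'cV[R]_n, Amat R M *m z = Amat R M *m zd ->
       norm1 (Dmat R n *m z) <= norm1 (Dmat R n *m zstar) ->
       z != zd -> (s^T *m zd) 0 0 < (s^T *m z) 0 0).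
Proof.
move=> hAs hopt s hs.
have fs := Amat_feas hAs.
split; first by split => //; apply: normLB.
move=> z hAz hz hne.
have fz := Amat_feas hAz.
have e1 := hopt zd erefl.
have e2 := normLB fz.
have E : forall r, `|(Dmat R n *m z) r 0| = uv r 0 * (Dmat R n *m z) r 0.
  have s0 : \sum_r (`|(Dmat R n *m z) r 0| - uv r 0 * (Dmat R n *m z) r 0) = 0.
    rewrite sumrB (LB fz) -/(norm1 _); lra.
  move=> r; apply/eqP; rewrite -subr_eq0; apply/eqP.
  apply: (psumr_eq0P _ s0) => // r' _.
  rewrite subr_ge0; apply: (le_trans (ler_norm _)); rewrite normrM.
  have := u_bound r'; have := normr_ge0 ((Dmat R n *m z) r' 0); nra.
have key : (s^T *m z) 0 0 - (s^T *m zd) 0 0 =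
    \sum_(r < n - 2) Q r.+1 * `|(Dmat R n *m z) r 0|.
  rewrite !mulE -sumrB.
  transitivity (\sum_k (Gv^T *m Dmat R n) 0 k * (z k 0 - zd k 0)).
    apply: eq_bigr => k _; rewrite [s^T 0 k]mxE -mulrBr.
    case: (boolP (k \in M)) => kM; first by rewrite (feas_ord fz kM) subrr !mulr0.
    have [i [j [hct [hk ->]]]] := Gv_DT kM.
    have [a [b [c [d [e [f g]]]]]] := ct_facts hct.
    rewrite (proj1 (hs k) i j hct hk) /Dlz !fs //.
  rewrite -MI; apply: eq_bigr => r _.
  rewrite mulrBr G_zd subr0 E [Gv r 0]mxE [uv r 0]mxE; ring.
rewrite -subr_gt0 key lt_def; apply/andP; split; last first.
  by apply: sumr_ge0 => r _; apply: mulr_ge0; [apply: Q_ge0|apply: normr_ge0].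
apply: contra hne => /eqP S0.
have Z : forall r : 'I_(n - 2), Q r.+1 * `|(Dmat R n *m z) r 0| = 0.
  move=> r; apply: (psumr_eq0P _ S0) => // r' _.
  by apply: mulr_ge0; [apply: Q_ge0|apply: normr_ge0].
apply/eqP/matrixP => k c; rewrite (ord1 c).
case: (boolP (k \in M)) => kM; first by rewrite (feas_ord fz kM).
have [i [j [hct /andP[ik kj]]]] := unsampled kM.
have [a [b [c' [d [e [f g]]]]]] := ct_facts hct.
have jn := inM_lt f.
have hij : (i.+2 <= j)%N by nlia.
have [hcz hzz hD] := cz_spec hct hij.
rewrite -!ent_ord; apply/eqP; rewrite -subr_eq0; apply/eqP.
apply: (propagate (f := fun m => ent z m - ent zd m) a hcz); rewrite ?fz ?subrr //; last by nlia.
move=> m hm ne.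
have -> : ent z m.-1 - ent zd m.-1 - 2 * (ent z m - ent zd m) + (ent z m.+1 - ent zd m.+1) =
  dd z m - dd zd m by rewrite /dd; ring.
rewrite (hzz _ hm ne) subr0.
have hr : (m.-1 < n - 2)%N by nlia.
have := Z (Ordinal hr); rewrite Drow /=.
have -> : (m.-1).+1 = m by nlia.
rewrite /Q (gap_some (c := m) (i := i) (j := j)); last by split.
move/eqP; rewrite mulf_eq0 => /orP[|]; last by rewrite normr_eq0 => /eqP.
rewrite mulf_eq0 invr_eq0 (_ : (2 : R) == 0 = false) ?orbF; last by apply/negbTE; rewrite pnatr_eq0.
rewrite sqrf_eq0 subr_eq0 eqr_nat => /eqP em.
by move/eqP: ne; rewrite em.
Qed.
End S.

Theorem corollary3 (R : realType) (n : nat) (zd : 'cV[R]_n) (M : {set 'I_n}) :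
  (3 <= n)%N ->
  union_of_twins M ->
  inM M 0 -> inM M n.-1 ->
  twin_in_every_segment zd M ->
  forall zstar : 'cV[R]_n,
    (* step (1): zstar is an optimal solution of min ||Dz||_1 s.t. Az = y *)
    Amat R M *m zstar = Amat R M *m zd ->
    (forall z : 'cV[R]_n, Amat R M *m z = Amat R M *m zd ->
       norm1 (Dmat R n *m zstar) <= norm1 (Dmat R n *m z)) ->
  forall s : 'cV[R]_n,
    (* step (2) *)
    sign_vector M zstar s ->
    (* step (3): zd is the unique minimizer of s^T z s.t. Az = y, ||Dz||_1 <= f* *)
    (Amat R M *m zd = Amat R M *m zd /\
     norm1 (Dmat R n *m zd) <= norm1 (Dmat R n *m zstar)) /\
    (forall z : 'cV[R]_n, Amat R M *m z = Amat R M *m zd ->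
       norm1 (Dmat R n *m z) <= norm1 (Dmat R n *m zstar) ->
       z != zd -> (s^T *m zd) 0 0 < (s^T *m z) 0 0).
Proof.
move=> hn hU h0 hN hseg zstar h1 h2 s hs.
by apply: main.
Qed.
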